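(* Let $G$ be a nilpotent group (not assumed finite). Then $G\in\mathfrak{Y}_n$ if and only if $G$ is either abelian or a finite minimal non-abelian $p$-group for some prime $p$.
   Context: $\mathfrak{Y}_n$ denotes the class of all groups $G$ (finite or infinite) such that $N_G(A)=A$ for every non-abelian subgroup $A\le G$. A group is minimal non-abelian if it is non-abelian but all its proper subgroups are abelian. *)

(* Defs.v *)
From Stdlib Require Import List.
From mathcomp Require Import ssreflect ssrbool ssrnat prime.

Record group := Group {
  gT :> Type;
  gmul : gT -> gT -> gT;
  gone : gT;
  ginv : gT -> gT;
  gmulA : forall x y z, gmul x (gmul y z) = gmul (gmul x y) z;
  gmul1 : forall x, gmul gone x = x;
  gmulV : forall x, gmul (ginv x) x = gone
}.

Section Defs.
Variable G : group.

Definition is_subgroup (A : G -> Prop) : Prop :=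
  A (gone G) /\
  (forall x y, A x -> A y -> A (gmul G x y)) /\
  (forall x, A x -> A (ginv G x)).

Definition abelian_set (A : G -> Prop) : Prop :=
  forall x y, A x -> A y -> gmul G x y = gmul G y x.

Definition conj (x g : G) : G := gmul G (gmul G (ginv G g) x) g.

Definition normalizer (A : G -> Prop) : G -> Prop :=
  fun g => forall x, A x <-> A (conj x g).

Definition in_Yn : Prop :=
  forall A : G -> Prop, is_subgroup A -> ~ abelian_set A ->
    forall g, normalizer A g <-> A g.

Definition abelian_group : Prop := abelian_set (fun _ => True).

Definition gen (S : G -> Prop) : G -> Prop :=
  fun x => forall H, is_subgroup H -> (forall y, S y -> H y) -> H x.

Definition comm (x y : G) : G :=
  gmul G (gmul G (ginv G x) (ginv G y)) (gmul G x y).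

Fixpoint lcs (n : nat) : G -> Prop :=
  match n with
  | 0 => fun _ => True
  | S m => gen (fun z => exists x y, lcs m x /\ z = comm x y)
  end.

Definition nilpotent : Prop := exists n, forall x, lcs n x -> x = gone G.

Definition minimal_nonabelian : Prop :=
  ~ abelian_group /\
  forall H : G -> Prop, is_subgroup H -> (exists g, ~ H g) -> abelian_set H.

Definition finite_pgroup (p : nat) : Prop :=
  exists (k : nat) (l : list G),
    NoDup l /\ (forall x, In x l) /\ length l = p ^ k.

End Defs.

(* Main.v *)
Require Import Defs.
From Stdlib Require Import List.
From mathcomp Require Import ssreflect ssrbool ssrnat prime.
From Stdlib Require Import ZArith Lia Classical ClassicalEpsilon.
From mathcomp Require Import zify.
From HB Require Import structures.
From mathcomp Require all_boot all_fingroup all_solvable.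

Fact zpow_key : unit. Proof. exact: tt. Qed.

Section Basic.
Variable G : group.
Local Notation "x · y" := (gmul G x y) (at level 40, left associativity).
Local Notation e := (gone G).
Local Notation iv := (ginv G).

Lemma mulgV (x : G) : x · iv x = e.
Proof.
rewrite -[x · iv x](gmul1 G) -[in X in X · _](gmulV G (iv x)).
by rewrite -gmulA [iv x · _]gmulA gmulV gmul1 gmulV.
Qed.

Lemma mulg1 (x : G) : x · e = x.
Proof. by rewrite -(gmulV G x) gmulA mulgV gmul1. Qed.

Lemma mulKg (x y : G) : iv x · (x · y) = y.
Proof. by rewrite gmulA gmulV gmul1. Qed.
Lemma mulKVg (x y : G) : x · (iv x · y) = y.
Proof. by rewrite gmulA mulgV gmul1. Qed.
Lemma mulgK (x y : G) : y · x · iv x = y.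
Proof. by rewrite -gmulA mulgV mulg1. Qed.
Lemma mulgKV (x y : G) : y · iv x · x = y.
Proof. by rewrite -gmulA gmulV mulg1. Qed.

Lemma mulg_injl (x y z : G) : x · y = x · z -> y = z.
Proof. by move=> h; rewrite -(mulKg x y) h mulKg. Qed.
Lemma mulg_injr (x y z : G) : y · x = z · x -> y = z.
Proof. by move=> h; rewrite -(mulgK x y) h mulgK. Qed.

Lemma invg_uniq (x y : G) : x · y = e -> y = iv x.
Proof. by move=> h; apply: (mulg_injl x); rewrite h mulgV. Qed.

Lemma invgK (x : G) : iv (iv x) = x.
Proof. by symmetry; apply: invg_uniq; rewrite gmulV. Qed.

Lemma invgM (x y : G) : iv (x · y) = iv y · iv x.
Proof. by symmetry; apply: invg_uniq; rewrite -gmulA mulKVg mulgV. Qed.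

Lemma invg1 : iv e = e.
Proof. by symmetry; apply: invg_uniq; rewrite mulg1. Qed.


Definition commute (x y : G) := x · y = y · x.

Lemma com_sym x y : commute x y -> commute y x.
Proof. by []. Qed.
Lemma com1 x : commute x e.
Proof. by rewrite /commute mulg1 gmul1. Qed.
Lemma comM x y z : commute x y -> commute x z -> commute x (y · z).
Proof. by rewrite /commute => h1 h2; rewrite gmulA h1 -gmulA h2 gmulA. Qed.
Lemma comV x y : commute x y -> commute x (iv y).
Proof.
rewrite /commute => h; apply: (mulg_injl y); rewrite gmulA -h -gmulA mulgV mulg1.
by rewrite gmulA mulgV gmul1.
Qed.
Lemma com_refl x : commute x x.
Proof. by []. Qed.

Fixpoint npow (x : G) (n : nat) : G :=
  match n with 0 => e | S k => x · npow x k end.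

Lemma comP x y n : commute x y -> commute x (npow y n).
Proof. by move=> h; elim: n => [|n IH] /=; [apply: com1 | apply: comM]. Qed.

Lemma npow_add x n m : npow x (n + m) = npow x n · npow x m.
Proof. elim: n => [|n IH] /=; first by rewrite gmul1. by rewrite IH gmulA. Qed.

Definition zpow_def (x : G) (z : Z) : G :=
  npow x (Z.to_nat z) · iv (npow x (Z.to_nat (- z))).
Definition zpow := locked_with zpow_key zpow_def.
Lemma zpowE x z : zpow x z = npow x (Z.to_nat z) · iv (npow x (Z.to_nat (- z))).
Proof. by rewrite /zpow; case: zpow_key. Qed.

Lemma comZ x y z : commute x y -> commute x (zpow y z).
Proof. by move=> h; rewrite zpowE; apply: comM; [apply: comP | apply: comV; apply: comP]. Qed.

Lemma npow_sub x n m : m <= n -> npow x (n - m) = npow x n · iv (npow x m).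
Proof.
move=> h; have -> : n = ((n - m) + m) by lia.
rewrite npow_add.
have -> : ((n - m + m) - m = n - m) by lia.
by rewrite mulgK.
Qed.

Lemma zpow_nat_sub x n m :
  zpow x (Z.of_nat n - Z.of_nat m)%Z = npow x n · iv (npow x m).
Proof.
rewrite !zpowE.
have cn : forall k, commute (npow x k) (npow x m).
  by move=> k; apply: comP; apply: com_sym; apply: comP; apply: com_refl.
case: (Nat.le_gt_cases m n) => h.
- have -> : Z.to_nat (Z.of_nat n - Z.of_nat m)%Z = (n - m)%coq_nat by lia.
  have -> : Z.to_nat (- (Z.of_nat n - Z.of_nat m))%Z = 0%coq_nat by lia.
  rewrite /= invg1 mulg1 -npow_sub //; lia.
- have -> : Z.to_nat (Z.of_nat n - Z.of_nat m)%Z = 0%coq_nat by lia.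
  have -> : Z.to_nat (- (Z.of_nat n - Z.of_nat m))%Z = (m - n)%coq_nat by lia.
  rewrite /= gmul1 -[(m - n)%coq_nat]/(m - n) npow_sub; last by lia.
  by rewrite invgM invgK.
Qed.

Lemma Z_as_sub (z : Z) : z = (Z.of_nat (Z.to_nat z) - Z.of_nat (Z.to_nat (- z)))%Z.
Proof. lia. Qed.

Lemma zpow_add x i j : zpow x (i + j) = zpow x i · zpow x j.
Proof.
rewrite (Z_as_sub i) (Z_as_sub j).
set a := Z.to_nat i; set b := Z.to_nat (-i); set c := Z.to_nat j; set d := Z.to_nat (-j).
have -> : (Z.of_nat a - Z.of_nat b + (Z.of_nat c - Z.of_nat d) =
           Z.of_nat (a + c)%coq_nat - Z.of_nat (b + d)%coq_nat)%Z by lia.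
rewrite !zpow_nat_sub !npow_add.
have cm : forall k l, commute (npow x k) (npow x l).
  by move=> k l; apply: comP; apply: com_sym; apply: comP; apply: com_refl.
rewrite invgM.
have h1 : commute (npow x c) (iv (npow x b)) by apply: comV; apply: cm.
rewrite /commute in h1.
rewrite !gmulA -[npow x a · iv (npow x b) · npow x c]gmulA -h1 !gmulA.
rewrite -!gmulA; congr (_ · (_ · _)).
have h2 : commute (iv (npow x d)) (iv (npow x b)).
  by apply: comV; apply: com_sym; apply: comV; apply: cm.
exact: h2.
Qed.

Lemma zpow0 x : zpow x 0 = e.
Proof. by rewrite !zpowE /= invg1 mulg1. Qed.
Lemma zpow1 x : zpow x 1 = x.
Proof. by rewrite !zpowE /= invg1 !mulg1. Qed.
Lemma zpow_nat x n : zpow x (Z.of_nat n) = npow x n.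
Proof. by have := zpow_nat_sub x n 0; rewrite /= Z.sub_0_r invg1 mulg1. Qed.


Lemma zpow_opp x i : zpow x (- i) = iv (zpow x i).
Proof. apply: invg_uniq; by rewrite -zpow_add Z.add_opp_diag_r zpow0. Qed.

Lemma zpowS x i : zpow x (i + 1) = zpow x i · x.
Proof. by rewrite zpow_add zpow1. Qed.

Lemma Zind (P : Z -> Prop) : P 0%Z -> (forall z, P z <-> P (z + 1)%Z) -> forall z, P z.
Proof.
move=> h0 hS; apply: Z.peano_ind => // z.
  have -> : Z.succ z = (z + 1)%Z by lia.
  by move/hS.
move=> Hz; apply/hS.
by have <- : z = (Z.pred z + 1)%Z by lia.
Qed.

Lemma zpow_mul x i j : zpow x (i * j) = zpow (zpow x i) j.
Proof.
elim/Zind: j => [|j]; first by rewrite Z.mul_0_r !zpow0.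
rewrite Z.mul_add_distr_l Z.mul_1_r zpow_add !zpowS.
split; first by move=> ->.
exact: mulg_injr.
Qed.

Lemma comZZ x y i j : commute x y -> commute (zpow x i) (zpow y j).
Proof. move=> h; apply: comZ; apply: com_sym; apply: comZ; exact: com_sym. Qed.

Lemma zpowM x y i : commute x y -> zpow (x · y) i = zpow x i · zpow y i.
Proof.
move=> h; elim/Zind: i => [|i]; first by rewrite !zpow0 mulg1.
rewrite !zpowS.
have hY := comZ x y i h; move: hY.
move: (zpow x i) (zpow y i) (zpow (x · y) i) => X Y Z hY.
have E : X · Y · (x · y) = X · x · (Y · y).
  by rewrite !gmulA -[X · Y · x]gmulA -hY gmulA.
rewrite -E; split; first by move=> ->.
exact: mulg_injr.
Qed.

Lemma conj_mul x y g : conj G (x · y) g = conj G x g · conj G y g.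
Proof. rewrite /conj; by rewrite !gmulA mulgK -!gmulA. Qed.
Lemma conj1 g : conj G e g = e.
Proof. by rewrite /conj mulg1 gmulV. Qed.
Lemma conj_inv x g : conj G (iv x) g = iv (conj G x g).
Proof. apply: invg_uniq; by rewrite -conj_mul mulgV conj1. Qed.
Lemma conj_zpow x g i : conj G (zpow x i) g = zpow (conj G x g) i.
Proof.
elim/Zind: i => [|i]; first by rewrite !zpow0 conj1.
rewrite !zpowS conj_mul; split; first by move=> ->.
exact: mulg_injr.
Qed.
Lemma conjM x g h : conj G x (g · h) = conj G (conj G x g) h.
Proof. by rewrite /conj invgM !gmulA. Qed.
Lemma conj_inj x y g : conj G x g = conj G y g -> x = y.
Proof. rewrite /conj => h; move: (mulg_injr _ _ _ h) => /mulg_injl //. Qed.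
Lemma conj_com x g : commute x g -> conj G x g = x.
Proof. by rewrite /conj /commute => h; rewrite -gmulA h mulKg. Qed.
Lemma conj_g1 x : conj G x e = x.
Proof. by rewrite /conj invg1 gmul1 mulg1. Qed.

End Basic.

Section Nil.
Variable G : group.
Local Notation "x · y" := (gmul G x y) (at level 40, left associativity).
Local Notation e := (gone G).
Local Notation iv := (ginv G).

Lemma comm_inv x y : iv (comm G x y) = comm G y x.
Proof. by rewrite /comm !invgM !invgK !gmulA. Qed.

Lemma conj_comm x g : conj G x g = x · comm G x g.
Proof. by rewrite /comm /conj !gmulA mulgV gmul1. Qed.

Lemma sg_mul H x y : is_subgroup G H -> H x -> H y -> H (x · y).
Proof. by case=> _ [h _]; apply: h. Qed.
Lemma sg_inv H x : is_subgroup G H -> H x -> H (iv x).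
Proof. by case=> _ [_ h]; apply: h. Qed.
Lemma sg_one H : is_subgroup G H -> H e.
Proof. by case. Qed.

Lemma find_step (Q : nat -> Prop) n : Q n -> ~ Q 0 -> exists i, ~ Q i /\ Q i.+1.
Proof.
elim: n => [//|n IH] hn h0.
case: (classic (Q n)) => hq; first exact: IH.
by exists n.
Qed.

Lemma normcond : nilpotent G -> forall H, is_subgroup G H -> (exists g, ~ H g) ->
  exists g, ~ H g /\ normalizer G H g.
Proof.
move=> [n hn] H sH [g0 hg0].
have [i [hi hi1]] : exists i, ~ (forall x, lcs G i x -> H x) /\ (forall x, lcs G i.+1 x -> H x).
  apply: (find_step _ n).
    by move=> x /hn ->; apply: sg_one.
  by move=> h; apply: hg0; apply: h.
have [g [lg ng]] : exists g, lcs G i g /\ ~ H g.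
  apply: NNPP => hn'; apply: hi => x lx; apply: NNPP => hx; apply: hn'; by exists x.
exists g; split => // x.
have hc : H (comm G x g).
  rewrite -comm_inv; apply: sg_inv => //; apply: hi1 => /=.
  move=> K sK hK; apply: hK; by exists g, x.
rewrite conj_comm; split => hx; first exact: sg_mul.
have -> : x = x · comm G x g · iv (comm G x g) by rewrite mulgK.
by apply: sg_mul => //; apply: sg_inv.
Qed.

Lemma sg_normalizer_self H h : is_subgroup G H -> H h -> normalizer G H h.
Proof.
move=> sH hh x; rewrite /conj; split=> hx.
  by apply: sg_mul => //; apply: sg_mul => //; apply: sg_inv.
have -> : x = h · (iv h · x · h) · iv h by rewrite !gmulA mulgV gmul1 mulgK.
by apply: sg_mul => //; [apply: sg_mul | apply: sg_inv].
Qed.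

Lemma min_nonab : nilpotent G -> in_Yn G -> ~ abelian_group G -> minimal_nonabelian G.
Proof.
move=> hN hY hA; split=> // H sH hp.
apply: NNPP => nab.
have [g [ng hg]] := normcond hN H sH hp.
by apply: ng; apply/(hY H sH nab).
Qed.

End Nil.

Section MNA.
Variable G : group.
Local Notation "x · y" := (gmul G x y) (at level 40, left associativity).
Local Notation e := (gone G).
Local Notation iv := (ginv G).
Hypothesis hN : nilpotent G.
Hypothesis hM : minimal_nonabelian G.

Lemma full_of_nonab H : is_subgroup G H -> ~ abelian_set G H -> forall g, H g.
Proof.
move=> sH nab g; apply: NNPP => hg; apply: nab; case: hM => _ h2; apply: h2 => //; by exists g.
Qed.

Definition Cz (x : G) : G -> Prop := fun y => y · x = x · y.

Lemma Cz_sg x : is_subgroup G (Cz x).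
Proof.
rewrite /Cz; split; first by rewrite gmul1 mulg1.
split.
- move=> y z hy hz; by rewrite -gmulA hz gmulA hy gmulA.
- move=> y hy; have := comV G x y (eq_sym hy); by rewrite /commute.
Qed.

Lemma normalizer_sg H : is_subgroup G H -> is_subgroup G (normalizer G H).
Proof.
move=> sH; split; first by move=> x; rewrite conj_g1.
split.
- move=> g h hg hh x; rewrite conjM; split.
  + by move=> hx; apply/(hh (conj G x g)); apply/(hg x).
  + by move=> hx; apply/(hg x); apply/(hh (conj G x g)).
- move=> g hg x; split => hx.
  + apply/(hg (conj G x (iv g))); rewrite -conjM gmulV conj_g1 //.
  + by move/(hg (conj G x (iv g))): hx; rewrite -conjM gmulV conj_g1.
Qed.

Lemma Cz_normal x : (exists g, ~ Cz x g) -> forall g, normalizer G (Cz x) g.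
Proof.
move=> hp; apply: full_of_nonab; first exact: normalizer_sg (Cz_sg x).
move=> ab.
have [g [ng hg]] := normcond G hN (Cz x) (Cz_sg x) hp.
apply: ng; rewrite /Cz; apply: ab => //.
apply: sg_normalizer_self; first exact: Cz_sg.
by rewrite /Cz.
Qed.

End MNA.

Section AB.
Variable G : group.
Local Notation "x · y" := (gmul G x y) (at level 40, left associativity).
Local Notation e := (gone G).
Local Notation iv := (ginv G).
Hypothesis hN : nilpotent G.
Hypothesis hM : minimal_nonabelian G.
Variables a b : G.
Hypothesis hab : a · b <> b · a.
Local Notation c := (comm G a b).
Local Notation A := (zpow G a).
Local Notation B := (zpow G b).
Local Notation C := (zpow G c).

Lemma ca : commute G c a.
Proof.
have nC := Cz_normal G hN hM a (ex_intro _ b (fun h => hab (eq_sym h))).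
have : Cz G a (iv a · conj G a b).
  apply: sg_mul; first exact: Cz_sg.
    by apply: sg_inv; [exact: Cz_sg | rewrite /Cz].
  by apply/(nC b a); rewrite /Cz.
rewrite /Cz /conj /comm /commute !gmulA => h; rewrite ?gmulA; exact: h.
Qed.

Lemma cb : commute G c b.
Proof.
have nC := Cz_normal G hN hM b (ex_intro _ a hab).
have : Cz G b (conj G (iv b) a · b).
  apply: sg_mul; first exact: Cz_sg.
    apply/(nC a (iv b)); apply: sg_inv; [exact: Cz_sg | by rewrite /Cz].
  by rewrite /Cz.
rewrite /Cz /conj /comm /commute !gmulA => h; rewrite ?gmulA; exact: h.
Qed.

Lemma c_ne1 : c <> e.
Proof.
move=> h; apply: hab; apply: (mulg_injl G (iv a · iv b)).
move: h; rewrite /comm => ->.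
by rewrite -!gmulA mulKg gmulV.
Qed.

Lemma conj_ab : conj G a b = a · c.
Proof. exact: conj_comm. Qed.

Lemma conj_a_Bj j : conj G a (B j) = a · C j.
Proof.
elim/Zind: j => [|j]; first by rewrite !zpow0 conj_g1 mulg1.
rewrite zpowS conjM.
have E : conj G (a · C j) b = a · C (j + 1).
  rewrite conj_mul conj_ab conj_zpow conj_com; last exact: cb.
  have hc : C j · c = c · C j.
    by have := comZ G c c j (com_refl G c); rewrite /commute.
  by rewrite zpowS hc gmulA.
split; first by move=> ->.
by rewrite -E => /conj_inj.
Qed.

Lemma key i j : conj G (A i) (B j) = A i · C (i * j).
Proof.
rewrite conj_zpow conj_a_Bj zpowM; last by apply: comZ; apply: com_sym; exact: ca.
by rewrite Z.mul_comm zpow_mul.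
Qed.

Lemma comCA k i : commute G (C k) (A i).
Proof. apply: comZZ; exact: ca. Qed.
Lemma comCB k j : commute G (C k) (B j).
Proof. apply: comZZ; exact: cb. Qed.
Lemma comCC k l : commute G (C k) (C l).
Proof. apply: comZZ; exact: com_refl. Qed.

Lemma BA i j : B j · A i = A i · B j · C (- (i * j)).
Proof.
have h := key i j; rewrite /conj in h.
have h2 : A i · B j = B j · (A i · C (i * j)) by rewrite -h !gmulA mulgV gmul1.
rewrite h2 zpow_opp gmulA -gmulA mulgV mulg1 //.
Qed.


Lemma swap3 (z x y w : G) : commute G z x -> commute G z y -> z · (x · y · w) = x · y · (z · w).
Proof.
rewrite /commute => h1 h2.
by rewrite !gmulA h1 -[x · z · y]gmulA h2 gmulA.
Qed.

Lemma rearr (a1 b1 a2 b2 w cm : G) : b1 · a2 = a2 · b1 · cm -> commute G cm b2 ->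
  a1 · b1 · (a2 · b2 · w) = a1 · a2 · (b1 · b2) · (cm · w).
Proof.
rewrite /commute => h1 h2.
rewrite !gmulA -[a1 · b1 · a2]gmulA h1 !gmulA -[a1 · a2 · b1 · cm · b2]gmulA h2.
by rewrite !gmulA.
Qed.

Definition NF (i j : Z) (g : G) := exists k, g = A i · B j · C k.

Lemma NF_mul i j i' j' g g' : NF i j g -> NF i' j' g' -> NF (i + i') (j + j') (g · g').
Proof.
move=> [k ->] [k' ->].
rewrite -gmulA swap3; [| exact: comCA | exact: comCB].
rewrite (rearr _ _ _ _ _ _ (BA i' j)); last exact: comCB.
by exists (- (i' * j) + (k + k'))%Z; rewrite -!zpow_add.
Qed.

Lemma NF_inv i j g : NF i j g -> NF (- i) (- j) (iv g).
Proof.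
move=> [k ->]; rewrite !invgM -!zpow_opp.
rewrite (BA (- i) (- j)) swap3; [| exact: comCA | exact: comCB].
by exists (- k + - (- i * - j))%Z; rewrite -zpow_add.
Qed.

Lemma NF_one : NF 0 0 e.
Proof. by exists 0%Z; rewrite !zpow0 !mulg1. Qed.

Lemma NF_a : NF 1 0 a.
Proof. by exists 0%Z; rewrite !zpow0 zpow1 !mulg1. Qed.
Lemma NF_b : NF 0 1 b.
Proof. by exists 0%Z; rewrite !zpow0 zpow1 gmul1 mulg1. Qed.
Lemma NF_c k : NF 0 0 (C k).
Proof. by exists k; rewrite !zpow0 gmul1 gmul1. Qed.

Lemma NF_eq i j i' j' g : i = i' -> j = j' -> NF i j g -> NF i' j' g.
Proof. by move=> -> ->. Qed.

Lemma NF_npow i j g n : NF i j g -> NF (i * Z.of_nat n) (j * Z.of_nat n) (npow G g n).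
Proof.
move=> h; elim: n => [|n IH] /=.
  by apply: NF_eq NF_one; lia.
apply: NF_eq (NF_mul _ _ _ _ _ _ h IH); lia.
Qed.

Lemma NF_pow i j g w : NF i j g -> NF (i * w) (j * w) (zpow G g w).
Proof.
move=> h; rewrite !zpowE.
have := NF_mul _ _ _ _ _ _ (NF_npow _ _ _ (Z.to_nat w) h)
                      (NF_inv _ _ _ (NF_npow _ _ _ (Z.to_nat (- w)) h)).
apply: NF_eq; rewrite {3}(Z_as_sub w); ring.
Qed.


Definition SG (q : Z) : G -> Prop := fun g => exists i j, NF (q * i) (q * j) g.

Lemma SG_sg q : is_subgroup G (SG q).
Proof.
split; first by exists 0%Z, 0%Z; apply: NF_eq NF_one; ring.
split.
- move=> x y [i [j hx]] [i' [j' hy]]; exists (i + i')%Z, (j + j')%Z.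
  apply: NF_eq (NF_mul _ _ _ _ _ _ hx hy); ring.
- move=> x [i [j hx]]; exists (- i)%Z, (- j)%Z.
  apply: NF_eq (NF_inv _ _ _ hx); ring.
Qed.

Lemma SG_full q x y : SG q x -> SG q y -> x · y <> y · x -> forall g, SG q g.
Proof.
move=> hx hy nxy; apply: (full_of_nonab G hM); first exact: SG_sg.
by move=> ab; apply: nxy; apply: ab.
Qed.

Lemma all_NF g : exists i j, NF i j g.
Proof.
have [i [j h]] : SG 1 g.
  apply: (SG_full 1 a b) => //.
    by exists 1%Z, 0%Z; apply: NF_eq NF_a; ring.
  by exists 0%Z, 1%Z; apply: NF_eq NF_b; ring.
by exists (1 * i)%Z, (1 * j)%Z.
Qed.

Definition Rl (x y : Z) := exists g, NF x y g /\ NF 0 0 g.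

Lemma Rl_two i j i' j' g : NF i j g -> NF i' j' g -> Rl (i - i') (j - j').
Proof.
move=> h1 h2; exists e; split; last exact: NF_one.
have := NF_mul _ _ _ _ _ _ h1 (NF_inv _ _ _ h2); rewrite mulgV.
by apply: NF_eq; ring.
Qed.

Lemma Rl_add x y x' y' : Rl x y -> Rl x' y' -> Rl (x + x') (y + y').
Proof.
move=> [g [h1 h2]] [g' [h1' h2']]; exists (g · g'); split.
  exact: NF_mul.
by apply: NF_eq (NF_mul _ _ _ _ _ _ h2 h2'); ring.
Qed.

Lemma Rl_scale x y s : Rl x y -> Rl (x * s) (y * s).
Proof.
move=> [g [h1 h2]]; exists (zpow G g s); split; first exact: NF_pow.
by apply: NF_eq (NF_pow _ _ _ s h2); ring.
Qed.

Lemma Rl_eq x y x' y' : x = x' -> y = y' -> Rl x y -> Rl x' y'.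
Proof. by move=> -> ->. Qed.

Lemma Rl_a D : Rl D 0 -> exists k, A D = C k.
Proof.
move=> [g [[k1 E1] [k2 E2]]]; exists (k2 - k1)%Z.
move: E2; rewrite E1 !zpow0 !mulg1 gmul1 => E.
by rewrite -Z.add_opp_r zpow_add zpow_opp -E mulgK.
Qed.

Lemma Rl_b D : Rl 0 D -> exists k, B D = C k.
Proof.
move=> [g [[k1 E1] [k2 E2]]]; exists (k2 - k1)%Z.
move: E2; rewrite E1 !zpow0 !gmul1 => E.
by rewrite -Z.add_opp_r zpow_add zpow_opp -E mulgK.
Qed.


Lemma fin_ord q : (2 <= q)%Z -> C (q * q) <> e ->
  exists D, D <> 0%Z /\ (exists k, A D = C k) /\ (exists k, B D = C k).
Proof.
move=> hq hc.
have nab : A q · B q <> B q · A q.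
  move=> E; apply: hc; apply: (mulg_injl G (A q)); rewrite mulg1 -key conj_com //.
have hA : SG q (A q).
  exists 1%Z, 0%Z; apply: NF_eq (NF_pow _ _ _ q NF_a); ring.
have hB : SG q (B q).
  exists 0%Z, 1%Z; apply: NF_eq (NF_pow _ _ _ q NF_b); ring.
have full := SG_full q _ _ hA hB nab.
have [i [j ha]] := full a; have [i' [j' hb]] := full b.
have r1 := Rl_two _ _ _ _ _ NF_a ha.
have r2 := Rl_two _ _ _ _ _ NF_b hb.
exists ((1 - q * i) * (1 - q * j') - (0 - q * i') * (0 - q * j))%Z; split; last split.
- have -> : ((1 - q * i) * (1 - q * j') - (0 - q * i') * (0 - q * j) =
             1 - q * (i + j' - q * i * j' + q * i' * j))%Z by ring.
  move: (i + j' - q * i * j' + q * i' * j)%Z => t.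
  clear -hq; case: (Z.le_gt_cases t 0) => ht; nia.
- apply: Rl_a; apply: Rl_eq (Rl_add _ _ _ _ (Rl_scale _ _ (1 - q * j')%Z r1)
                                          (Rl_scale _ _ (- (0 - q * j))%Z r2)); ring.
- apply: Rl_b; apply: Rl_eq (Rl_add _ _ _ _ (Rl_scale _ _ (- (0 - q * i'))%Z r1)
                                          (Rl_scale _ _ (1 - q * i)%Z r2)); ring.
Qed.

Lemma C_D D k : A D = C k -> C D = e.
Proof.
move=> h; have := key D 1; rewrite zpow1 Z.mul_1_r h conj_com.
  by move=> E; apply: (mulg_injl G (C k)); rewrite -E mulg1.
by have := comCB k 1; rewrite zpow1.
Qed.

Lemma zpow_e (n : Z) : zpow G e n = e.
Proof.
elim/Zind: n => [|n]; first by rewrite zpow0.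
by rewrite zpowS mulg1.
Qed.

Lemma exists_N : exists N : nat, (0 < N)%coq_nat /\ (exists k, A (Z.of_nat N) = C k) /\
   (exists k, B (Z.of_nat N) = C k) /\ C (Z.of_nat N) = e.
Proof.
have [D [D0 [[k1 hA] [k2 hB]]]] : exists D, D <> 0%Z /\ (exists k, A D = C k) /\ (exists k, B D = C k).
  case: (classic (C (2 * 2) = e)) => h4; last by apply: (fin_ord 2) => //; lia.
  apply: (fin_ord 5); first lia.
  have -> : (5 * 5 = 2 * 2 * 6 + 1)%Z by ring.
  rewrite zpow_add zpow_mul h4 zpow_e gmul1 zpow1; exact: c_ne1.
have hC := C_D _ _ hA.
exists (Z.abs_nat D); split; first lia.
case: (Z.le_gt_cases 0 D) => hD.
- have -> : Z.of_nat (Z.abs_nat D) = D by lia.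
  by split; [exists k1 | split; [exists k2 |]].
- have -> : Z.of_nat (Z.abs_nat D) = (- D)%Z by lia.
  rewrite !zpow_opp hA hB hC invg1 -!zpow_opp.
  by split; [exists (- k1)%Z | split; [exists (- k2)%Z |]].
Qed.


Lemma in_box : exists N : nat, (0 < N)%coq_nat /\ forall g, exists r s t : nat,
  (r < N)%coq_nat /\ (s < N)%coq_nat /\ (t < N)%coq_nat /\
  g = A (Z.of_nat r) · B (Z.of_nat s) · C (Z.of_nat t).
Proof.
have [N [N0 [[kA hA] [[kB hB] hC]]]] := exists_N.
exists N; split => // g.
set Nz := Z.of_nat N.
have Nz0 : Nz <> 0%Z by rewrite /Nz; lia.
have dm : forall z, z = (Nz * (z / Nz) + z mod Nz)%Z by move=> z; apply: Z.div_mod.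
have Cmod : forall k, C k = C (k mod Nz).
  move=> k; rewrite {1}(dm k) zpow_add zpow_mul hC zpow_e gmul1 //.
have Amod : forall i, A i = A (i mod Nz) · C (kA * (i / Nz)).
  move=> i; rewrite {1}(dm i) zpow_add zpow_mul hA -zpow_mul.
  by have := comCA (kA * (i / Nz))%Z (i mod Nz); rewrite /commute.
have Bmod : forall j, B j = B (j mod Nz) · C (kB * (j / Nz)).
  move=> j; rewrite {1}(dm j) zpow_add zpow_mul hB -zpow_mul.
  by have := comCB (kB * (j / Nz))%Z (j mod Nz); rewrite /commute.
have bd : forall z, (0 <= z mod Nz < Nz)%Z by move=> z; apply: Z.mod_pos_bound; lia.
have [i [j [k ->]]] := all_NF g.
rewrite (Amod i) (Bmod j).
set u := (kA * (i / Nz))%Z; set v := (kB * (j / Nz))%Z.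
have E : A (i mod Nz) · C u · (B (j mod Nz) · C v) · C k =
         A (i mod Nz) · B (j mod Nz) · C ((u + v + k) mod Nz).
  rewrite -Cmod !zpow_add !gmulA; congr (_ · _ · _).
  rewrite -[A (i mod Nz) · C u · B (j mod Nz)]gmulA.
  by have := comCB u (j mod Nz); rewrite /commute => ->; rewrite gmulA.
rewrite E.
exists (Z.to_nat (i mod Nz)), (Z.to_nat (j mod Nz)), (Z.to_nat ((u + v + k) mod Nz)).
have b1 := bd i; have b2 := bd j; have b3 := bd (u + v + k)%Z.
rewrite !Z2Nat.id; try lia.
split; first lia. split; first lia. split; first lia. done.
Qed.

End AB.

Section AB2.
Variable G : group.
Local Notation "x · y" := (gmul G x y) (at level 40, left associativity).
Local Notation e := (gone G).
Local Notation iv := (ginv G).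
Hypothesis hN : nilpotent G.
Hypothesis hM : minimal_nonabelian G.
Variables a b : G.
Hypothesis hab : a · b <> b · a.
Local Notation C := (zpow G (comm G a b)).

Lemma C_central k g : commute G (C k) g.
Proof.
have [i [j [l ->]]] := all_NF G hN hM a b hab g.
apply: comM; [apply: comM|]; [exact: comCA | exact: comCB | exact: comCC].
Qed.

Lemma comm_C x y : exists k, comm G x y = C k.
Proof.
have [i [j hx]] := all_NF G hN hM a b hab x.
have [i' [j' hy]] := all_NF G hN hM a b hab y.
have := NF_mul G hN hM a b hab _ _ _ _ _ _
           (NF_mul G hN hM a b hab _ _ _ _ _ _ (NF_inv G hN hM a b hab _ _ _ hx)
                                            (NF_inv G hN hM a b hab _ _ _ hy))
           (NF_mul G hN hM a b hab _ _ _ _ _ _ hx hy).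
have -> : (- i + - i' + (i + i') = 0)%Z by ring.
have -> : (- j + - j' + (j + j') = 0)%Z by ring.
move=> [k E]; exists k; rewrite /comm E !zpow0 !gmul1 //.
Qed.

Lemma finite_list : exists L : list G, forall g, List.In g L.
Proof.
have [N [N0 hb]] := in_box G hN hM a b hab.
set f := fun r s t : nat => zpow G a (Z.of_nat r) · zpow G b (Z.of_nat s) · C (Z.of_nat t).
exists (flat_map (fun r => flat_map (fun s => map (fun t => f r s t) (List.seq 0 N))
                                      (List.seq 0 N)) (List.seq 0 N)).
move=> g; have [r [s [t [hr [hs [ht ->]]]]]] := hb g.
apply/in_flat_map; exists r; split; first by apply/in_seq; lia.
apply/in_flat_map; exists s; split; first by apply/in_seq; lia.
apply/in_map_iff; exists t; split => //; apply/in_seq; lia.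
Qed.

End AB2.

Module FinPart.
Import all_boot all_fingroup all_solvable.

Section Fin.
Variable G : Defs.group.
Definition GT := gT G.
Definition geqb (x y : GT) : bool :=
  if excluded_middle_informative (x = y) then true else false.
Lemma geqP : Equality.axiom geqb.
Proof. move=> x y; rewrite /geqb; case: excluded_middle_informative => h; by constructor. Qed.
HB.instance Definition _ := hasDecEq.Build GT geqP.

Variable L : seq GT.
Hypothesis hL : forall x, List.In x L.

Lemma inL x : x \in L.
Proof. have := hL x; elim: L => //= y s IH [->|h]; rewrite inE ?eqxx //; apply/orP; right; exact: IH. Qed.

Lemma fa : finite_axiom (undup L).
Proof. move=> x; rewrite count_uniq_mem ?undup_uniq // mem_undup inL. done. Qed.

Local Notation FT := (fin_type fa).
Lemma FmulA : associative (gmul G : FT -> FT -> FT).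
Proof. move=> x y z; exact: gmulA. Qed.
Lemma Fmul1 : left_id (gone G : FT) (gmul G).
Proof. exact: gmul1. Qed.
Lemma FmulV : left_inverse (gone G : FT) (ginv G) (gmul G).
Proof. exact: gmulV. Qed.
HB.instance Definition _ := Finite_isGroup.Build FT FmulA Fmul1 FmulV.

Hypothesis hM : minimal_nonabelian G.
Hypothesis hcomm : forall x y z : G, gmul G (comm G x y) z = gmul G z (comm G x y).

Local Notation X := [set: FT].
Local Open Scope group_scope.

Lemma nonab : ~~ abelian X.
Proof.
apply/negP => /centsP ab; case: hM => h _; apply: h => x y _ _.
exact: (ab x (in_setT _) y (in_setT _)).
Qed.

Lemma prop_ab (H : {group FT}) : H \proper X -> abelian H.
Proof.
case/properP => _ [x _ nx].
have sg : is_subgroup G (fun g : G => (g : FT) \in H).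
  split; first exact: (group1 H).
  split; first by move=> u v hu hv; exact: (groupM hu hv).
  by move=> u hu; have hh : (u : FT)^-1 \in H by rewrite groupV.

case: hM => _ h.
have ab := h _ sg (ex_intro _ x (fun hx => (negP nx) hx)).
by apply/centsP => u hu v hv; exact: ab.
Qed.

Lemma nilX : nilpotent X.
Proof.
apply/lcnP; exists 2; rewrite lcnSn lcn2.
apply/commG1P; rewrite /derived_at /= /commutator gen_subG.
apply/subsetP => _ /imset2P [x y _ _ ->]; apply/centP => z _.
rewrite /commute /commg /conjg; have := hcomm x y z.
have e1 : gmul G (gmul G (ginv G x) (ginv G y)) (gmul G x y) =
          gmul G (ginv G x) (gmul G (ginv G y) (gmul G x y)) by rewrite -gmulA.
rewrite /comm e1 => E; exact: E.
Qed.

Lemma NoDup_uniq (s : seq GT) : uniq s -> List.NoDup s.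
Proof.
elim: s => [|y s IH] /=; first by constructor.
case/andP => ny us; constructor; last exact: IH.
move=> hy; move/negP: ny; apply.
elim: s hy {IH us} => //= z s IH [->|h]; rewrite inE ?eqxx //.
by apply/orP; right; apply: IH.
Qed.

Lemma in_In (x : GT) (s : seq GT) : x \in s -> List.In x s.
Proof.
elim: s => //= y s IH; rewrite inE => /orP [/eqP ->|h]; [by left | right; exact: IH].
Qed.

Lemma finite_p : exists p, prime p /\ finite_pgroup G p.
Proof.
have c1 : 1 < #|X|.
  case: (ltnP 1 #|X|) => // h; case/negP: nonab.
  by rewrite (card_le1_trivg h) abelian1.
set p := pdiv #|X|.
have pp : prime p by exact: pdiv_prime.
have cardX : #|X| = size (undup L).
  rewrite cardsT -(card_uniqP (undup_uniq (L : seq FT))).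
  by apply: eq_card => x; rewrite mem_undup inL.
suff : p.-group X.
  move/p_natP => [k hk]; exists p; split => //; exists k, (undup L).
  split; first exact: NoDup_uniq (undup_uniq _).
  split; last by rewrite -hk cardX.
  move=> x; apply: in_In; rewrite mem_undup; exact: inL.
have dp := nilpotent_pcoreC p nilX.
case: (eqVproper (pcore_sub p X)) => [<-|pr1]; first exact: pcore_pgroup.
have ab1 := prop_ab _ pr1.
case: (eqVproper (pcore_sub p^' X)) => [e2|pr2].
  have : p^'.-group X by rewrite -e2; exact: pcore_pgroup.
  move/pnatPpi => /(_ p); rewrite pi_pdiv c1 => /(_ isT).
  by rewrite inE /= inE eqxx.
have ab2 := prop_ab _ pr2.
case/dprodP: dp => _ e cC _.
case/negP: nonab; rewrite -e abelianM ab1 ab2 /=; exact: cC.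
Qed.
End Fin.

End FinPart.

Theorem proposition2p6 (G : group) :
  nilpotent G ->
  (in_Yn G <->
   abelian_group G \/
   exists p : nat, prime p /\ finite_pgroup G p /\ minimal_nonabelian G).
Proof.
move=> hN; split.
- move=> hY.
  case: (classic (abelian_group G)) => hA; first by left.
  right.
  have hM := min_nonab G hN hY hA.
  have [a [b hab]] : exists a b : G, gmul G a b <> gmul G b a.
    apply: NNPP => h; apply: hA => x y _ _; apply: NNPP => hxy; apply: h; by exists x, y.
  have [L hL] := finite_list G hN hM a b hab.
  have hcomm : forall x y z : G, gmul G (comm G x y) z = gmul G z (comm G x y).
    move=> x y z; have [k ->] := comm_C G hN hM a b hab x y.
    exact: C_central.
  have [p [pp fp]] := FinPart.finite_p G L hL hM hcomm.
  by exists p.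
- case=> [hA | [p [_ [_ hM]]]].
  + by move=> A _ nab; case: nab => x y _ _; apply: hA.
  + move=> A sA nab g.
    have full := full_of_nonab G hM A sA nab.
    by split => // _ x; split => _; apply: full.
Qed.
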